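(* A power series $\varphi(x)=\sum_{i\ge0}\gamma_ix^i\in\mathbb{K}[[x]]$ is an element of $\mathcal{F}_1$ if and only if $$\sum_{i=0}^m(-1)^i\binom{2m-1}{m-i}\binom{m+i}{i}\gamma_{m+i-1}=0$$ for each $m\ge1$.
   Context: $\mathbb{K}\in\{\mathbb{Q},\mathbb{R},\mathbb{C}\}$. $\mathcal{F}_1$ denotes the space of $\varphi\in\mathbb{K}[[x]]$ with $\varphi(x/(x-1))=(1-x)\varphi(x)$. *)

(* Defs.v *)
From mathcomp Require Import all_boot all_order all_algebra.
Set Implicit Arguments. Unset Strict Implicit. Unset Printing Implicit Defensive.
Import Order.TTheory GRing.Theory Num.Theory.
Local Open Scope ring_scope.

Definition fps (K : nzRingType) := nat -> K.

Definition fone (K : nzRingType) : fps K := fun n => if n == 0%N then 1 else 0.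
Definition fX (K : nzRingType) : fps K := fun n => if n == 1%N then 1 else 0.

Definition fsub (K : nzRingType) (f g : fps K) : fps K := fun n => f n - g n.

Definition fmul (K : nzRingType) (f g : fps K) : fps K :=
  fun n => \sum_(i < n.+1) f i * g (n - i)%N.

Definition fpow (K : nzRingType) (f : fps K) (k : nat) : fps K :=
  iter k (fmul f) (fone K).

(* Composition phi(psi(x)), meaningful when psi 0 = 0 (then psi^i has
   order >= i, so only i <= n contribute to the coefficient of x^n). *)
Definition fcomp (K : nzRingType) (phi psi : fps K) : fps K :=
  fun n => \sum_(i < n.+1) phi i * fpow psi i n.

(* The series x/(x-1) = -x/(1-x) = - sum_{n>=1} x^n. *)
Definition x_over_xm1 (K : nzRingType) : fps K :=
  fun n => if n == 0%N then 0 else -1.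

Definition in_F1 (K : nzRingType) (phi : fps K) : Prop :=
  fcomp phi (x_over_xm1 K) = fmul (fsub (fone K) (fX K)) phi.

(* Main.v *)
Require Import Defs.
From mathcomp Require Import all_boot all_order all_algebra.
From mathcomp Require Import ring zify.
From Stdlib Require Import FunctionalExtensionality.
Import Order.TTheory GRing.Theory Num.Theory.
Local Open Scope ring_scope.

Lemma natfact1 x n : (x < n)%N -> (n - (n - x.+1).+1)%N = x.
Proof. move=> h; lia. Qed.

Lemma fact_neq0 (K : numFieldType) n : (n`!)%:R != 0 :> K.
Proof. by rewrite pnatr_eq0 -lt0n fact_gt0. Qed.

Lemma binK (K : numFieldType) p q : (q <= p)%N ->
  ('C(p, q))%:R = (p`!)%:R / ((q`!)%:R * ((p - q)`!)%:R) :> K.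
Proof.
move=> h; rewrite -(bin_fact h) !natrM mulfK // mulf_neq0 // ?fact_neq0 //.
Qed.

Lemma keyid (K : numFieldType) n k : (k <= n)%N ->
  ('C((2*n).+1, n - k))%:R * ('C((n+k).+2, k.+1))%:R
  = ('C((2*n).+1, n.+1))%:R * (('C(n, k.+1))%:R + 2 * ('C(n, k))%:R) :> K.
Proof.
rewrite leq_eqVlt => /orP [/eqP -> | hk].
  rewrite subnn bin0 (bin_small (ltnSn n)) binn mul1r add0r mulr1.
  have e : 'C((n + n).+1, n) = 'C((n + n).+1, n.+1).
    rewrite -(bin_sub (n := (n+n).+1) (m := n.+1)) ?ltnS ?leq_addr //.
    by have -> : ((n + n).+1 - n.+1 = n)%N by lia.
  have -> : (2 * n)%N = (n + n)%N by lia.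
  rewrite binS e natrD; ring.
have [q ->] : exists q, n = (k + q.+1)%N by exists (n - k.+1)%N; lia.
rewrite !binK; try lia.
have -> : ((2 * (k + q.+1)).+1 - (k + q.+1 - k))%N = (k + q.+1 + k).+1 by lia.
have -> : (k + q.+1 - k)%N = q.+1 by lia.
have -> : ((k + q.+1 + k).+2 - k.+1)%N = (k + q.+1).+1 by lia.
have -> : ((2 * (k + q.+1)).+1 - (k + q.+1).+1)%N = (k + q.+1)%N by lia.
have -> : ((k + q.+1) - k.+1)%N = q by lia.
set F1 := ((((2 * (k + q.+1)).+1)`!)%:R : K).
set F2 := ((((k + q.+1 + k).+1)`!)%:R : K).
set F3 := ((q`!)%:R : K).
set F4 := ((k`!)%:R : K).
set F5 := (((k + q.+1)`!)%:R : K).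
have fq : ((q.+1)`!)%:R = (q.+1)%:R * F3 :> K by rewrite factS natrM.
have f2 : (((k + q.+1 + k).+2)`!)%:R = ((k + q.+1 + k).+2)%:R * F2 :> K by rewrite factS natrM.
have fk : ((k.+1)`!)%:R = (k.+1)%:R * F4 :> K by rewrite factS natrM.
have f5 : (((k + q.+1).+1)`!)%:R = ((k + q.+1).+1)%:R * F5 :> K by rewrite factS natrM.
rewrite fq f2 fk f5.
have h2 : F2 != 0 by apply: fact_neq0.
have h3 : F3 != 0 by apply: fact_neq0.
have h4 : F4 != 0 by apply: fact_neq0.
have h5 : F5 != 0 by apply: fact_neq0.
have hq : (q.+1)%:R != 0 :> K by rewrite pnatr_eq0.
have hk1 : (k.+1)%:R != 0 :> K by rewrite pnatr_eq0.
have hkq : ((k + q.+1).+1)%:R != 0 :> K by rewrite pnatr_eq0.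
have hkk : ((k + q.+1 + k).+1)%:R != 0 :> K by rewrite pnatr_eq0.
move: hq hk1 hkq hkk; rewrite !(mulrS, natrD) => hq hk1 hkq hkk.
field; by rewrite !fact_neq0 hq hk1 hkq.
Qed.

Section Aux.
Variable K : numFieldType.
Variable gamma : nat -> K.

Definition pr (P : {poly K}) : K := \sum_(i < size P) P`_i * gamma i.

Lemma prE {P : {poly K}} {N} : (size P <= N)%N -> pr P = \sum_(i < N) P`_i * gamma i.
Proof.
move=> hN; rewrite /pr -(subnKC hN) big_split_ord /=.
rewrite [X in _ + X]big1 ?addr0 // => i _.
by rewrite nth_default ?mul0r // leq_addr.
Qed.

Lemma prD P Q : pr (P + Q) = pr P + pr Q.
Proof.
rewrite (prE (size_polyD P Q)) (prE (leq_maxl (size P) (size Q))).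
rewrite (prE (leq_maxr (size P) (size Q))) -big_split /=.
by apply: eq_bigr => i _; rewrite coefD mulrDl.
Qed.

Lemma prN P : pr (- P) = - pr P.
Proof. rewrite /pr size_polyN -sumrN; apply: eq_bigr => i _; by rewrite coefN mulNr. Qed.

Lemma prB P Q : pr (P - Q) = pr P - pr Q.
Proof. by rewrite prD prN. Qed.

Lemma pr0 : pr 0 = 0.
Proof. by rewrite /pr size_poly0 big_ord0. Qed.

Lemma prXn m : pr ('X^m) = gamma m.
Proof.
rewrite /pr size_polyXn big_ord_recr /= coefXn eqxx mul1r big1 ?add0r // => i _.
by rewrite coefXn /= (ltn_eqF (ltn_ord i)) mul0r.
Qed.

Definition uX : {poly K} := 'X.
Definition vX : {poly K} := 1 - 'X.
Definition AA a b : {poly K} := uX ^+ a * vX ^+ b - uX ^+ b * vX ^+ a.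
Definition RR j : {poly K} := uX ^+ j - vX ^+ j.
Definition ww : {poly K} := uX * vX.

Lemma A_rec a b : AA a b.+2 = AA a b.+1 - AA a.+1 b.+1.
Proof. rewrite /AA /vX /uX !exprS. ring. Qed.

Lemma R_rec j : RR j.+2 = RR j.+1 - ww * RR j.
Proof. rewrite /RR /ww /vX /uX !exprS. ring. Qed.

Lemma wR1 a : ww ^+ a * RR 1 = - AA a a.+1.
Proof. rewrite /AA /RR /ww exprMn !exprS !expr0. ring. Qed.

Lemma A01 : AA 0 1 = - (ww ^+ 0 * RR 1).
Proof. rewrite /AA /RR /ww !expr0 !expr1. ring. Qed.

Lemma AS1 a : AA a.+1 1 = ww ^+ 1 * RR a.
Proof. rewrite /AA /RR /ww !exprS !expr0. ring. Qed.

Lemma A_all (h : forall a, pr (AA a 1) = 0) : forall b a, pr (AA a b.+1) = 0.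
Proof. elim=> [|b IH] a; first exact: h. by rewrite A_rec prB !IH subrr. Qed.

Lemma R_all (h : forall k, pr (AA k k.+1) = 0) : forall j a, pr (ww ^+ a * RR j) = 0.
Proof.
suff H : forall j, (forall a, pr (ww ^+ a * RR j) = 0) /\ (forall a, pr (ww ^+ a * RR j.+1) = 0).
  by move=> j a; case: (H j) => ->.
elim=> [|j [IH1 IH2]].
  split=> a; first by rewrite /RR !expr0 subrr mulr0 pr0.
  by rewrite wR1 prN h oppr0.
split=> // a; rewrite R_rec mulrBr mulrA -exprSr prB IH2 IH1 subrr //.
Qed.

Lemma A1_all (h : forall k, pr (AA k k.+1) = 0) : forall a, pr (AA a 1) = 0.
Proof.
case=> [|a]; first by rewrite A01 prN (R_all h) oppr0.
by rewrite AS1 (R_all h).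
Qed.


Definition psi := x_over_xm1 K.

Lemma fpowS_sum i n : fpow psi i.+1 n = - \sum_(t < n) fpow psi i t.
Proof.
rewrite /fpow iterS /fmul big_ord_recl /= /psi /x_over_xm1 /= mul0r add0r.
rewrite -sumrN (reindex_inj rev_ord_inj) /=; apply: eq_bigr => j _.
rewrite mulN1r; congr (- iter _ _ _ _).
rewrite /bump leq0n add1n; case: j => x hx /=; exact: natfact1.
Qed.

Lemma fpowS0 i : fpow psi i.+1 0 = 0.
Proof. by rewrite fpowS_sum big_ord0 oppr0. Qed.

Lemma hockey k n : (\sum_(t < n) 'C(t, k))%N = 'C(n, k.+1).
Proof. elim: n => [|n IH]; first by rewrite big_ord0 bin0n. by rewrite big_ord_recr /= IH binS. Qed.

Lemma fpow_closed k n : fpow psi k.+1 n.+1 = (-1) ^+ k.+1 * ('C(n, k))%:R.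
Proof.
elim: k n => [|k IH] n.
  rewrite fpowS_sum big_ord_recl big1 ?addr0 => [|i _]; last by [].
  by rewrite bin0 expr1 mulr1.
rewrite fpowS_sum big_ord_recl fpowS0 add0r.
under eq_bigr => i _ do rewrite IH.
by rewrite -mulr_sumr -natr_sum hockey (exprS _ k.+1) mulN1r mulNr.
Qed.

Lemma coefv n j : (vX ^+ n)`_j = (-1) ^+ j * ('C(n, j))%:R.
Proof.
elim: n j => [|n IH] j.
  by rewrite expr0 coef1 bin0n; case: j => [|j] //=; rewrite ?mulr1 ?mulr0.
rewrite exprS /vX mulrBl mul1r coefB coefXM IH; case: j => [|j] /=.
  by rewrite !bin0 subr0.
by rewrite IH binS natrD exprS; ring.
Qed.

Lemma size_XvX n : (size (- ('X * vX ^+ n)) <= n.+2)%N.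
Proof.
apply/leq_sizeP => j hj; rewrite coefN coefXM; case: j hj => [//|j] /= hj.
by rewrite coefv bin_small ?mulr0 ?oppr0.
Qed.

Lemma lhs_eq n : fcomp gamma psi n.+1 = pr (- ('X * vX ^+ n)).
Proof.
rewrite (prE (size_XvX n)) /fcomp; apply: eq_bigr => -[[|k] hk] _ /=.
  by rewrite coefN coefXM /= oppr0 mul0r mulr0.
change (fmul psi (fpow psi k)) with (fpow psi k.+1); rewrite fpow_closed coefN coefXM /= coefv mulrC; congr (_ * _).
by rewrite exprS mulN1r mulNr.
Qed.

Lemma rhs_eq n : fmul (fsub (fone K) (fX K)) gamma n.+1 = gamma n.+1 - gamma n.
Proof.
rewrite /fmul big_ord_recl big_ord_recl big1 => [|i _]; last first.
  by rewrite /fsub /fone /fX /= subrr mul0r.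
by rewrite /fsub /fone /fX /= subr0 sub0r subn0 subSS subn0 addr0 mul1r mulN1r.
Qed.

Lemma key_E n : fcomp gamma psi n.+1 - fmul (fsub (fone K) (fX K)) gamma n.+1 = pr (AA n 1).
Proof.
rewrite lhs_eq rhs_eq -(prXn n.+1) -(prXn n) -!prB; congr pr.
rewrite /AA /uX /vX !exprS !expr0; ring.
Qed.

Lemma E_equiv : in_F1 gamma <-> forall a, pr (AA a 1) = 0.
Proof.
split.
  move=> h a; rewrite -key_E; have -> : fcomp gamma psi a.+1 = fmul (fsub (fone K) (fX K)) gamma a.+1.
    by rewrite /psi h.
  by rewrite subrr.
move=> h; apply: functional_extensionality => -[|n].
  by rewrite /fcomp /fmul !big_ord_recl !big_ord0 /fsub /fone /fX /= !addr0 subr0 mulr1 mul1r.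
by apply/eqP; rewrite -subr_eq0 key_E h.
Qed.

Definition Bp n : {poly K} := vX ^+ n - (vX ^+ n * 'X) *+ 2.

Lemma A_diag n : AA n n.+1 = 'X^n * Bp n.
Proof. rewrite /AA /Bp /uX /vX !exprS mulr2n; ring. Qed.

Lemma coefBp0 n : (Bp n)`_0 = 1.
Proof. by rewrite /Bp coefB coefMn coefMX /= coefv bin0 expr0 mulr1 mul0rn subr0. Qed.

Lemma coefBp n k : (Bp n)`_k.+1 = (-1) ^+ k.+1 * (('C(n, k.+1))%:R + 2 * ('C(n, k))%:R).
Proof. rewrite /Bp coefB coefMn coefMX /= !coefv mulr2n exprS; ring. Qed.

Lemma size_Bp n : (size (Bp n) <= n.+2)%N.
Proof.
apply/leq_sizeP => -[//|k] hk; rewrite coefBp.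
rewrite (bin_small (n:=n) (m:=k.+1)) ?(bin_small (n:=n) (m:=k)) ?mulr0 ?addr0 ?mulr0 //.
by apply: ltnW.
Qed.

Lemma prXnM n (B : {poly K}) N : (size B <= N)%N -> pr ('X^n * B) = \sum_(i < N) B`_i * gamma (n + i).
Proof.
move=> hB.
have hs : (size ('X^n * B)%R <= n + N)%N.
  apply/leq_sizeP => j hj; rewrite coefXnM; case: ifP => // _.
  rewrite nth_default //; move: (size B) hB hj => s hs1 hs2; clear -hs1 hs2; lia.
rewrite (prE hs) big_split_ord /= big1 ?add0r => [|i _].
  by apply: eq_bigr => i _; rewrite coefXnM ltnNge leq_addr /= addKn.
by rewrite coefXnM ltn_ord mul0r.
Qed.

Lemma F_eq n : \sum_(i < n.+2) (-1) ^+ i * ('C(2 * n.+1 - 1, n.+1 - i))%:R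
   * ('C(n.+1 + i, i))%:R * gamma (n.+1 + i - 1)%N
  = ('C((2*n).+1, n.+1))%:R * pr (AA n n.+1).
Proof.
have e2 : (2 * n.+1 - 1 = (2*n).+1)%N by lia.
rewrite A_diag (@prXnM n (Bp n) n.+2 (size_Bp n)) mulr_sumr; apply: eq_bigr => -[[|k] hk] _ /=.
  rewrite coefBp0 e2 subn0 bin0 subn1 /= !addn0 expr0; ring.
have hk' : (k <= n)%N by rewrite -ltnS.
have e3 : (n.+1 + k.+1 - 1 = n + k.+1)%N by lia.
have e4 : (n.+1 + k.+1 = (n + k).+2)%N by lia.
rewrite e2 e3 e4 subSS coefBp.
transitivity ((-1) ^+ k.+1 * (('C((2 * n).+1, n - k))%:R * ('C((n + k).+2, k.+1))%:R) * gamma (n + k.+1)); first by ring.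
rewrite keyid //; ring.
Qed.

End Aux.

Theorem lemma4p4 (K : numFieldType) (gamma : nat -> K) :
  in_F1 gamma <->
  (forall m : nat, (1 <= m)%N ->
     \sum_(i < m.+1)
        (-1) ^+ i * ('C(2 * m - 1, m - i))%:R * ('C(m + i, i))%:R
          * gamma (m + i - 1)%N = 0).
Proof.
split.
  move=> h [//|n] _; rewrite F_eq.
  by rewrite (@A_all K gamma (fun a => (proj1 (E_equiv K gamma) h a)) n n) mulr0.
move=> h; apply/(E_equiv K gamma); apply: A1_all => k.
have := h k.+1 isT; rewrite F_eq => /eqP; rewrite mulf_eq0 pnatr_eq0.
have -> : ('C((2 * k).+1, k.+1) == 0%N) = false by apply/negbTE; rewrite -lt0n bin_gt0 ltnS; lia.
by move=> /eqP.
Qed.
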